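(* Let $n,m$ be positive integers, let $\mathbf{A}_c\in\mathbb{Z}^{m\times 2n}$ and $\mathbf{b}_c\in\mathbb{Z}^{m}$, and let $c[\bar x,\bar x']$ be the linear constraint $\mathbf{A}_c\langle \mathbf{x},\mathbf{x}'\rangle\ge \mathbf{b}_c$ in the $2n$ variables $\bar x=(x_1,\dots,x_n)$, $\bar x'=(x'_1,\dots,x'_n)$. Assume $c$ is satisfiable over $\mathbb{Q}_+^{2n}$. Consider the binary $\mathrm{CLP}(\mathbb{Q}_+)$ clause $C$: $p(\bar x)\mathrel{:-} c[\bar x,\bar x'],\,p(\bar x')$, where $p$ is an $n$-ary predicate. Define $$\mathrm{plrf}(C)=\Bigl\{\boldsymbol\mu\in\mathbb{Q}_+^n \;\Bigm|\; \forall \bar x,\bar x'\in\mathbb{Q}_+^n:\ c[\bar x,\bar x']\implies \sum_{i=1}^n\mu_i x_i-\sum_{i=1}^n \mu_i x'_i\ge 1\Bigr\}$$ and let $\mathrm{svg}(C)$ be the set of all $\boldsymbol\mu\in\mathbb{Q}_+^n$ for which there exists $\mathbf{y}\in\mathbb{Q}^m$ such that $\langle\mathbf{y},\boldsymbol\mu\rangle$ satisfies the system $$\begin{pmatrix}\mathbf{A}_c^{\mathrm T} & \begin{matrix}-\mathbf{I}_n\\ \mathbf{I}_n\end{matrix}\\ -\mathbf{b}_c^{\mathrm T} & \mathbf{0}\end{pmatrix}\langle\mathbf{y},\boldsymbol\mu\rangle\le\begin{pmatrix}\mathbf{0}\\-1\end{pmatrix},\qquad \langle\mathbf{y},\boldsymbol\mu\rangle\ge\mathbf{0},$$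 i.e. $\mathbf{y}\ge \mathbf 0$, $\mathbf{A}_c^{\mathrm T}\mathbf{y}\le\langle\boldsymbol\mu,-\boldsymbol\mu\rangle$ componentwise, and $\mathbf{b}_c^{\mathrm T}\mathbf{y}\ge 1$. Then $\mathrm{plrf}(C)=\mathrm{svg}(C)$.
   Context: $\mathbb{Q}_+$ denotes the nonnegative rationals. For vectors $\mathbf v\in\mathbb{Q}^a,\mathbf w\in\mathbb{Q}^b$, $\langle\mathbf v,\mathbf w\rangle\in\mathbb{Q}^{a+b}$ denotes their concatenation (as a column vector); vector inequalities are componentwise; $\mathbf{I}_n$ is the $n\times n$ identity matrix and $\mathbf 0$ a zero matrix/vector of appropriate size. The constraint $c[\bar x,\bar x']$ is identified with the vector inequality $\mathbf{A}_c\langle\mathbf x,\mathbf x'\rangle\ge\mathbf b_c$ where $\mathbf x=\langle x_1,\dots,x_n\rangle$, $\mathbf x'=\langle x'_1,\dots,x'_n\rangle$. *)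

(* Defs.v *)
From mathcomp Require Import all_boot all_order all_algebra.
Set Implicit Arguments. Unset Strict Implicit. Unset Printing Implicit Defensive.
Import Order.TTheory GRing.Theory Num.Theory.
Local Open Scope ring_scope.

Definition cv_le (k : nat) (u v : 'cV[rat]_k) : Prop := forall i, u i 0 <= v i 0.

Definition ratM (p q : nat) (M : 'M[int]_(p, q)) : 'M[rat]_(p, q) :=
  map_mx (fun z : int => z%:~R) M.

Definition sat_c (n m : nat) (A : 'M[int]_(m, n + n)) (b : 'cV[int]_m)
  (x x' : 'cV[rat]_n) : Prop :=
  cv_le (ratM b) (ratM A *m col_mx x x').

Definition plrf (n m : nat) (A : 'M[int]_(m, n + n)) (b : 'cV[int]_m)
  (mu : 'cV[rat]_n) : Prop :=
  cv_le 0 mu /\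
  forall x x' : 'cV[rat]_n, cv_le 0 x -> cv_le 0 x' -> sat_c A b x x' ->
    \sum_(i < n) mu i 0 * x i 0 - \sum_(i < n) mu i 0 * x' i 0 >= 1.

Definition svg (n m : nat) (A : 'M[int]_(m, n + n)) (b : 'cV[int]_m)
  (mu : 'cV[rat]_n) : Prop :=
  cv_le 0 mu /\
  exists y : 'cV[rat]_m,
    cv_le 0 y /\
    cv_le ((ratM A)^T *m y) (col_mx mu (- mu)) /\
    1 <= ((ratM b)^T *m y) 0 0.

(* Main.v *)
Require Import Defs.
From mathcomp Require Import all_boot all_order all_algebra.
From mathcomp Require Import ring lra.
From Stdlib Require Import Classical.
Set Implicit Arguments. Unset Strict Implicit. Unset Printing Implicit Defensive.
Import Order.TTheory GRing.Theory Num.Theory.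
Local Open Scope ring_scope.

Definition dot (R : realFieldType) (p : nat) (a z : nat -> R) : R :=
  \sum_(j < p) a j * z j.
Definition holds (R : realFieldType) (s : bool) (d v : R) : Prop :=
  if s then d < v else d <= v.

Lemma choose_t (R : realFieldType) (I : finType) (Lo Up : pred I) (L U : I -> R)
  (s : I -> bool) :
  (forall i j, Lo i -> Up j -> holds (s i || s j) (L i) (U j)) ->
  exists t, (forall i, Lo i -> holds (s i) (L i) t) /\
            (forall j, Up j -> holds (s j) t (U j)).
Proof.
move=> H.
case: (pickP Lo) => [i0 Li0|noL]; case: (pickP Up) => [j0 Uj0|noU].
- case: (@arg_maxP _ R I i0 Lo L Li0) => im Lim Hmax.
  case: (@arg_minP _ R I j0 Up U Uj0) => jm Ujm Hmin.
  have Hmm := H im jm Lim Ujm.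
  have Hmm' : L im <= U jm by move: Hmm; rewrite /holds; case: ifP => _ // /ltW.
  exists ((L im + U jm) / 2); split.
  + move=> i Li; have /= := Hmax i Li; have := H i jm Li Ujm; rewrite /holds.
    by case: (s i) => /=; [|case: (s jm)] => h1 h2; lra.
  + move=> j Uj; have := Hmin j Uj; have := H im j Lim Uj; rewrite /holds.
    case: (s j); rewrite ?orbT /= => h1 h2; first lra.
    by move: h1; case: (s im) => /= h1; lra.
- case: (@arg_maxP _ R I i0 Lo L Li0) => im Lim Hmax.
  exists (L im + 1); split; last by move=> j; rewrite noU.
  move=> i Li; have /= := Hmax i Li; rewrite /holds; case: (s i) => h; lra.
- case: (@arg_minP _ R I j0 Up U Uj0) => jm Ujm Hmin.
  exists (U jm - 1); split; first by move=> i; rewrite noL.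
  move=> i Li; have := Hmin i Li; rewrite /holds; case: (s i) => h; lra.
- by exists 0; split => i; rewrite ?noL ?noU.
Qed.


Definition valid (R : realFieldType) (I : finType) (a : I -> nat -> R) p (i j : I) :=
  (0 < a i p) && (a j p < 0).
Definition alp (R : realFieldType) (I : finType) (a : I -> nat -> R) p (i j : I) : R := if @valid R I a p i j then - a j p else 0.
Definition bet (R : realFieldType) (I : finType) (a : I -> nat -> R) p (i j : I) : R := if @valid R I a p i j then a i p else 0.
Definition gam (R : realFieldType) (I : finType) (a : I -> nat -> R) p (i : I) : R :=
  if a i p == 0 then 1 else 0.
Definition comb (R : realFieldType) (I : finType) (a : I -> nat -> R) p (f : I -> R) (J : ((I * I) + I)%type) : R :=
  match J with
  | inl ij => @alp R I a p ij.1 ij.2 * f ij.1 + @bet R I a p ij.1 ij.2 * f ij.2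
  | inr i => @gam R I a p i * f i
  end.
Definition yb (R : realFieldType) (I : finType) (a : I -> nat -> R) p (y' : ((I * I) + I)%type -> R) (i : I) : R :=
  \sum_j y' (inl (i, j)) * @alp R I a p i j + \sum_j y' (inl (j, i)) * @bet R I a p j i
  + y' (inr i) * @gam R I a p i.

Lemma alp_ge0 (R : realFieldType) (I : finType) (a : I -> nat -> R) p i j : 0 <= @alp R I a p i j.
Proof. rewrite /alp /valid; case: ifP => // /andP [_ h]; by rewrite oppr_ge0 ltW. Qed.
Lemma bet_ge0 (R : realFieldType) (I : finType) (a : I -> nat -> R) p i j : 0 <= @bet R I a p i j.
Proof. rewrite /bet /valid; case: ifP => // /andP [h _]; exact: ltW. Qed.
Lemma gam_ge0 (R : realFieldType) (I : finType) (a : I -> nat -> R) p i : 0 <= @gam R I a p i.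
Proof. by rewrite /gam; case: ifP. Qed.

Lemma yb_sum (R : realFieldType) (I : finType) (a : I -> nat -> R) p (y' : ((I * I) + I)%type -> R) (f : I -> R) :
  \sum_i @yb R I a p y' i * f i = \sum_J y' J * @comb R I a p f J.
Proof.
rewrite big_sumType /=.
under eq_bigr do rewrite /yb !mulrDl.
rewrite !big_split /=; congr (_ + _).
rewrite [RHS](eq_bigr (fun ij => y' (inl ij) * alp a p ij.1 ij.2 * f ij.1 +
   y' (inl ij) * bet a p ij.1 ij.2 * f ij.2)); last by move=> ij _; rewrite mulrDr !mulrA.
rewrite big_split /=; congr (_ + _).
  rewrite (eq_bigr (fun i => \sum_j y' (inl (i,j)) * alp a p i j * f i));
    last by move=> i _; rewrite mulr_suml.
  by rewrite pair_bigA; apply: eq_bigr => -[i j].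
rewrite (eq_bigr (fun i => \sum_j y' (inl (j,i)) * bet a p j i * f i));
  last by move=> i _; rewrite mulr_suml.
by rewrite exchange_big pair_bigA; apply: eq_bigr => -[i j].
by apply: eq_bigr => i _; rewrite mulrA.
Qed.

Lemma dot_comb (R : realFieldType) (I : finType) (a : I -> nat -> R) p q J z :
  dot q (fun k => comb a p (fun i => a i k) J) z = comb a p (fun i => dot q (a i) z) J.
Proof.
rewrite /dot; case: J => [[i j]|i] /=.
  rewrite !mulr_sumr -big_split; apply: eq_bigr => k _ /=; by rewrite mulrDl !mulrA.
by rewrite mulr_sumr; apply: eq_bigr => k _; rewrite mulrA.
Qed.

Lemma comb_p0 (R : realFieldType) (I : finType) (a : I -> nat -> R) p J :
  comb a p (fun i => a i p) J = 0.
Proof.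
case: J => [[i j]|i] /=; rewrite /alp /bet /gam.
  by case: ifP => _; rewrite ?mul0r ?addr0 //; ring.
by case: ifP => [/eqP ->|_]; rewrite ?mulr0 ?mul0r.
Qed.

Lemma dot_succ (R : realFieldType) p (a z' : nat -> R) t :
  dot p.+1 a (fun k => if k == p then t else z' k) = dot p a z' + a p * t.
Proof.
rewrite /dot big_ord_recr /= eqxx; congr (_ + _).
by apply: eq_bigr => k _ /=; rewrite ltn_eqF.
Qed.

Lemma pair_arith (R : realFieldType) s (ai aj di dj li lj : R) :
  0 < ai -> aj < 0 -> holds s (-aj*di + ai*dj) (-aj*li + ai*lj) ->
  holds s ((di-li)/ai) ((dj-lj)/aj).
Proof.
move=> hi hj; set u := (di - li) / ai; set v := (dj - lj) / aj.
have eu : di - li = u * ai by rewrite /u divfK // gt_eqF.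
have ev : dj - lj = v * aj by rewrite /v divfK // lt_eqF.
have hp : 0 < ai * (- aj) by rewrite mulr_gt0 // oppr_gt0.
have key : (-aj*li + ai*lj) - (-aj*di + ai*dj) = (ai * - aj) * (v - u).
  have -> : di = u * ai + li by rewrite -eu; ring.
  have -> : dj = v * aj + lj by rewrite -ev; ring.
  ring.
rewrite /holds; case: s => h.
  have : 0 < (ai * - aj) * (v - u) by rewrite -key; lra.
  by rewrite pmulr_rgt0 // subr_gt0.
have : 0 <= (ai * - aj) * (v - u) by rewrite -key; lra.
by rewrite pmulr_rge0 // subr_ge0.
Qed.

Lemma pos_arith (R : realFieldType) s (ai di li t : R) :
  0 < ai -> holds s ((di-li)/ai) t -> holds s di (li + ai*t).
Proof.
move=> hi; rewrite /holds; case: s.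
  by rewrite ltr_pdivrMr // => h; lra.
by rewrite ler_pdivrMr // => h; lra.
Qed.

Lemma neg_arith (R : realFieldType) s (ai di li t : R) :
  ai < 0 -> holds s t ((di-li)/ai) -> holds s di (li + ai*t).
Proof.
move=> hi; rewrite /holds; case: s.
  by rewrite ltr_ndivlMr // => h; lra.
by rewrite ler_ndivlMr // => h; lra.
Qed.

Lemma le_sum1 (R : realFieldType) (I : finType) (F : I -> R) j :
  (forall j, 0 <= F j) -> F j <= \sum_j F j.
Proof.
move=> h; rewrite (bigD1 j) //= lerDl; apply: sumr_ge0 => k _; exact: h.
Qed.

Lemma FM (R : realFieldType) (p : nat) : forall (I : finType) (a : I -> nat -> R)
  (d : I -> R) (s : I -> bool),
  (forall z : nat -> R, exists i, ~ holds (s i) (d i) (dot p (a i) z)) ->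
  exists y : I -> R, (forall i, 0 <= y i) /\
    (forall k, (k < p)%N -> \sum_i y i * a i k = 0) /\
    (0 < \sum_i y i * d i \/ (0 <= \sum_i y i * d i /\ exists i, s i /\ 0 < y i)).
Proof.
elim: p => [|p IH] I a d s Hinf.
  have [i Hi] := Hinf (fun _ => 0).
  exists (fun k => (k == i)%:R); split; first by move=> k; rewrite ler0n.
  split; first by [].
  have -> : \sum_k (k == i)%:R * d k = d i.
    rewrite (bigD1 i) //= eqxx mul1r big1 ?addr0 // => k /negbTE ->; by rewrite mul0r.
  move: Hi; rewrite /holds /dot big_ord0; case E: (s i) => h.
    right; split; first lra.
    by exists i; rewrite E eqxx ltr01.
  by left; lra.
pose a' J k := comb a p (fun i => a i k) J.
pose d' := comb a p d.
pose s' (J : ((I * I) + I)%type) := match J with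
  | inl ij => valid a p ij.1 ij.2 && (s ij.1 || s ij.2)
  | inr i => (a i p == 0) && s i end.
have Hinf' : forall z', exists J, ~ holds (s' J) (d' J) (dot p (a' J) z').
  move=> z'; apply: NNPP => Hall.
  have Hh : forall J, holds (s' J) (d' J) (dot p (a' J) z').
    by move=> J; apply: NNPP => HJ; apply: Hall; exists J.
  pose l i := dot p (a i) z'.
  have HLU : forall i j, 0 < a i p -> a j p < 0 ->
      holds (s i || s j) ((d i - l i) / a i p) ((d j - l j) / a j p).
    move=> i j hi hj; apply: pair_arith => //.
    have := Hh (inl (i, j)); rewrite /s' /d' /a' dot_comb /= /alp /bet /valid hi hj /=.
    done.
  have [t [Ht1 Ht2]] := @choose_t R I (fun i => 0 < a i p) (fun i => a i p < 0)
     (fun i => (d i - l i) / a i p) (fun i => (d i - l i) / a i p) s HLU.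
  have [i Hi] := Hinf (fun k => if k == p then t else z' k).
  apply: Hi; rewrite dot_succ.
  case: (ltrgt0P (a i p)) => hap.
  - by apply: pos_arith => //; apply: Ht1.
  - by apply: neg_arith => //; apply: Ht2.
  - have := Hh (inr i); rewrite /s' /d' /a' dot_comb /= /gam hap eqxx /= !mul1r.
    by rewrite mul0r addr0.
have [y' [Hy'0 [Hy'k Hy'd]]] := IH _ a' d' s' Hinf'.
exists (yb a p y'); split.
  move=> i; rewrite /yb; apply: addr_ge0; first apply: addr_ge0.
  - by apply: sumr_ge0 => j _; apply: mulr_ge0 => //; apply: alp_ge0.
  - by apply: sumr_ge0 => j _; apply: mulr_ge0 => //; apply: bet_ge0.
  - by apply: mulr_ge0 => //; apply: gam_ge0.
split.
  move=> k; rewrite ltnS leq_eqVlt => /orP [/eqP ->|hk].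
    by rewrite yb_sum big1 // => J _; rewrite comb_p0 mulr0.
  by rewrite yb_sum; apply: Hy'k.
rewrite yb_sum; case: Hy'd => [h|[h [J [hs hy]]]]; [by left | right; split => //].
have Hge : forall i, 0 <= y' i by [].
case: J hs hy => [[i j]|i] /=.
  rewrite /valid => /andP [/andP [hi hj] hs] hy.
  have hal : 0 < alp a p i j by rewrite /alp /valid hi hj /= oppr_gt0.
  have hbe : 0 < bet a p i j by rewrite /bet /valid hi hj.
  have hA : forall i0 j0, 0 <= y' (inl (i0, j0)) * alp a p i0 j0.
    by move=> i0 j0; apply: mulr_ge0 => //; apply: alp_ge0.
  have hB : forall i0 j0, 0 <= y' (inl (i0, j0)) * bet a p i0 j0.
    by move=> i0 j0; apply: mulr_ge0 => //; apply: bet_ge0.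
  have hC : forall i0, 0 <= y' (inr i0) * gam a p i0.
    by move=> i0; apply: mulr_ge0 => //; apply: gam_ge0.
  have hpos : 0 < y' (inl (i, j)) * alp a p i j by exact: mulr_gt0.
  have hpos' : 0 < y' (inl (i, j)) * bet a p i j by exact: mulr_gt0.
  case/orP: hs => hs.
    exists i; split => //; rewrite /yb.
    have h1 := @le_sum1 _ _ (fun k => y' (inl (i, k)) * alp a p i k) j (hA i).
    have h2 : 0 <= \sum_k y' (inl (k, i)) * bet a p k i by apply: sumr_ge0 => k _.
    have h3 := hC i.
    simpl in h1; lra.
  exists j; split => //; rewrite /yb.
  have h1 := @le_sum1 _ _ (fun k => y' (inl (k, j)) * bet a p k j) i (fun k => hB k j).
  have h2 : 0 <= \sum_k y' (inl (j, k)) * alp a p j k by apply: sumr_ge0 => k _.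
  have h3 := hC j.
  simpl in h1; lra.
move=> /andP [h0 hs] hy; exists i; split => //; rewrite /yb.
have hg : gam a p i = 1 by rewrite /gam h0.
have h2 : 0 <= \sum_k y' (inl (i, k)) * alp a p i k.
  by apply: sumr_ge0 => k _; apply: mulr_ge0 => //; apply: alp_ge0.
have h3 : 0 <= \sum_k y' (inl (k, i)) * bet a p k i.
  by apply: sumr_ge0 => k _; apply: mulr_ge0 => //; apply: bet_ge0.
rewrite hg mulr1; lra.
Qed.

Definition ext (q : nat) (f : 'I_q -> rat) (k : nat) : rat :=
  if insub k is Some o then f o else 0.

Lemma ext_val q (f : 'I_q -> rat) (o : 'I_q) : ext f o = f o.
Proof. by rewrite /ext valK. Qed.

Lemma dot_ext q (f : 'I_q -> rat) z : dot q (ext f) z = \sum_(o < q) f o * z o.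
Proof. by apply: eq_bigr => o _; rewrite ext_val. Qed.

Lemma sum_delta (I : finType) (F : I -> rat) o' :
  \sum_o (o' == o)%:R * F o = F o'.
Proof.
rewrite (bigD1 o') //= eqxx mul1r big1 ?addr0 // => k hk.
by rewrite eq_sym (negbTE hk) mul0r.
Qed.

Lemma sum_delta' (I : finType) (F : I -> rat) o' :
  \sum_o F o * (o == o')%:R = F o'.
Proof.
rewrite (bigD1 o') //= eqxx mulr1 big1 ?addr0 // => k hk.
by rewrite (negbTE hk) mulr0.
Qed.

Lemma dual_zero (R : realFieldType) (I : finType) p (a : I -> nat -> R) (y : I -> R) z :
  (forall k, (k < p)%N -> \sum_i y i * a i k = 0) ->
  \sum_i y i * dot p (a i) z = 0.
Proof.
move=> h; rewrite /dot.
under eq_bigr do rewrite mulr_sumr.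
rewrite exchange_big /= big1 // => k _.
transitivity ((\sum_i y i * a i k) * z k); last by rewrite h ?mul0r.
by rewrite mulr_suml; apply: eq_bigr => i _; rewrite mulrA.
Qed.

Lemma colmx_ge0 n (x x' : 'cV[rat]_n) :
  cv_le 0 x -> cv_le 0 x' -> forall o, 0 <= col_mx x x' o 0.
Proof.
move=> hx hx' o; rewrite -(splitK o); case: (split o) => j /=.
  by rewrite col_mxEu; have := hx j; rewrite mxE.
by rewrite col_mxEd; have := hx' j; rewrite mxE.
Qed.

Lemma obj_split n (mu x x' : 'cV[rat]_n) :
  \sum_(o < n + n) col_mx mu (- mu) o 0 * col_mx x x' o 0 =
  \sum_(i < n) mu i 0 * x i 0 - \sum_(i < n) mu i 0 * x' i 0.
Proof.
rewrite big_split_ord /=; congr (_ + _).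
  by apply: eq_bigr => i _; rewrite !col_mxEu.
rewrite -sumrN; apply: eq_bigr => i _; by rewrite !col_mxEd mxE mulNr.
Qed.

Theorem theorem1 (n m : nat) (A : 'M[int]_(m, n + n)) (b : 'cV[int]_m) :
  (0 < n)%N -> (0 < m)%N ->
  (exists x x' : 'cV[rat]_n, cv_le 0 x /\ cv_le 0 x' /\ sat_c A b x x') ->
  forall mu : 'cV[rat]_n, plrf A b mu <-> svg A b mu.
Proof.
move=> _ _ [x0 [x0' [hx0 [hx0' hsat0]]]] mu; split.
  move=> [hmu hpl]; split => //.
  pose a (J : ('I_m + ('I_(n+n) + 'I_1))%type) : nat -> rat :=
    match J with
    | inl i => ext (fun o => ratM A i o)
    | inr (inl o') => ext (fun o => (o' == o)%:R)
    | inr (inr _) => ext (fun o => - col_mx mu (- mu) o 0)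
    end.
  pose d (J : ('I_m + ('I_(n+n) + 'I_1))%type) : rat :=
    match J with
    | inl i => ratM b i 0
    | inr (inl _) => 0
    | inr (inr _) => -1
    end.
  pose s (J : ('I_m + ('I_(n+n) + 'I_1))%type) : bool :=
    match J with inr (inr _) => true | _ => false end.
  have Hinf : forall z, exists J, ~ holds (s J) (d J) (dot (n + n) (a J) z).
    move=> z; apply: NNPP => Hall.
    have Hh : forall J, holds (s J) (d J) (dot (n + n) (a J) z).
      by move=> J; apply: NNPP => HJ; apply: Hall; exists J.
    pose w := \col_(o < n + n) z o.
    have key : forall f, dot (n + n) (ext f) z = \sum_o f o * w o 0.
      by move=> f; rewrite dot_ext; apply: eq_bigr => o _; rewrite mxE.
    have ew : col_mx (usubmx w) (dsubmx w) = w := vsubmxK w.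
    have hwn : forall o, 0 <= w o 0.
      move=> o; have := Hh (inr (inl o)); rewrite /holds /= key.
      by rewrite sum_delta.
    have hx : cv_le 0 (usubmx w) by move=> i; rewrite !mxE; have := hwn (lshift n i); rewrite mxE.
    have hx' : cv_le 0 (dsubmx w) by move=> i; rewrite !mxE; have := hwn (rshift n i); rewrite mxE.
    have hs : sat_c A b (usubmx w) (dsubmx w).
      move=> i; rewrite ew [X in _ <= X]mxE.
      have := Hh (inl i); rewrite /holds /= key.
      by apply: le_trans; rewrite le_eqVlt; apply/orP; left; apply/eqP.
    have h1 := hpl _ _ hx hx' hs.
    rewrite -obj_split ew in h1.
    have := Hh (inr (inr ord0)); rewrite /holds /= key.
    under eq_bigr do rewrite mulNr.
    rewrite sumrN; lra.
  have [y [hy [hk hd]]] := FM Hinf.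
  pose z0 := ext (fun o => col_mx x0 x0' o 0).
  have hz := dual_zero z0 hk.
  rewrite big_sumType big_sumType big_ord1 /= in hz.
  rewrite big_sumType big_sumType big_ord1 /= in hd.
  have e0 : \sum_(i < n + n) y (inr (inl i)) * 0 = 0 by rewrite big1 // => o _; rewrite mulr0.
  rewrite e0 add0r mulrN1 in hd.
  set lam := y (inr (inr ord0)) in hz hd.
  have hlam0 : 0 <= lam by apply: hy.
  set SYb := \sum_i y (inl i) * ratM b i 0 in hd.
  have hV : dot (n + n) (a (inr (inr ord0))) z0 =
      - (\sum_(i < n) mu i 0 * x0 i 0 - \sum_(i < n) mu i 0 * x0' i 0).
    rewrite /= dot_ext -obj_split -sumrN; apply: eq_bigr => o _.
    by rewrite /z0 ext_val mulNr.
  rewrite hV in hz.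
  set V := \sum_(i < n) mu i 0 * x0 i 0 - \sum_(i < n) mu i 0 * x0' i 0 in hz.
  have h1 : SYb <= \sum_i y (inl i) * dot (n + n) (a (inl i)) z0.
    apply: ler_sum => i _; apply: ler_wpM2l; first exact: hy.
    rewrite /= dot_ext; have := hsat0 i; rewrite [X in _ <= X]mxE.
    move/le_trans; apply; rewrite le_eqVlt; apply/orP; left; apply/eqP.
    by apply: eq_bigr => o _; rewrite /z0 ext_val.
  have h2 : 0 <= \sum_o y (inr (inl o)) * dot (n + n) (a (inr (inl o))) z0.
    apply: sumr_ge0 => o _; apply: mulr_ge0; first exact: hy.
    rewrite /= dot_ext sum_delta /z0 ext_val; exact: colmx_ge0.
  have hSV : SYb <= lam * V.
    have : lam * - V = - (lam * V) by rewrite mulrN.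
    lra.
  have hlam : 0 < lam.
    rewrite lt_neqAle hlam0 andbT; apply/negP => /eqP h0.
    rewrite -h0 mul0r in hSV.
    case: hd => [hd|[hd [J [hsJ hyJ]]]].
      by lra.
    case: J hsJ hyJ => [i|[o|o]] //= _.
    by rewrite (ord1 o) -/lam -h0 ltxx.
  have hSb : lam <= SYb.
    by case: hd => [hd|[hd _]]; lra.
  exists (\col_i (y (inl i) / lam)); split.
    by move=> i; rewrite !mxE divr_ge0 // hy.
  split.
    move=> o; have := hk o (ltn_ord o).
    rewrite big_sumType big_sumType big_ord1 /= ext_val.
    under eq_bigr do rewrite ext_val.
    under [X in _ + (X + _) = _]eq_bigr do rewrite ext_val.
    rewrite sum_delta' -/lam => hko.
    rewrite [X in X <= _]mxE.
    have -> : \sum_j (ratM A)^T o j * (\col_i (y (inl i) / lam)) j 0 =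
              (\sum_i y (inl i) * ratM A i o) / lam.
      rewrite mulr_suml; apply: eq_bigr => j _; rewrite !mxE.
      by rewrite mulrA [_ * y _]mulrC.
    rewrite ler_pdivrMr //.
    have : 0 <= y (inr (inl o)) by apply: hy.
    move: hko; set S := \sum_i _.
    set W := y (inr (inl o)); set C := col_mx mu (-mu) o 0.
    have -> : lam * - C = - (C * lam) by rewrite mulrN mulrC.
    lra.
  rewrite mxE.
  have -> : \sum_j (ratM b)^T 0 j * (\col_i (y (inl i) / lam)) j 0 = SYb / lam.
    rewrite /SYb mulr_suml; apply: eq_bigr => j _; rewrite !mxE.
    by rewrite mulrA [_ * y _]mulrC.
  by rewrite ler_pdivlMr // mul1r.
move=> [hmu [y [hy [hAy hby]]]]; split => // x x' hx hx' hsat.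
rewrite -obj_split.
apply: (le_trans hby).
have E1 : ((ratM b)^T *m y) 0 0 = \sum_i ratM b i 0 * y i 0.
  by rewrite mxE; apply: eq_bigr => i _; rewrite mxE.
rewrite E1.
apply: (@le_trans _ _ (\sum_i (\sum_(o < n + n) ratM A i o * col_mx x x' o 0) * y i 0)).
  apply: ler_sum => i _; apply: ler_wpM2r; first by have := hy i; rewrite mxE.
  by move: (hsat i); rewrite /= [X in _ <= X]mxE.
under eq_bigr do rewrite mulr_suml.
rewrite exchange_big /=; apply: ler_sum => o _.
have h := hAy o; rewrite [X in X <= _]mxE in h.
apply: (@le_trans _ _ ((\sum_i ratM A i o * y i 0) * col_mx x x' o 0)).
  by rewrite mulr_suml; apply: ler_sum => i _; rewrite mulrAC.
apply: ler_wpM2r; first exact: colmx_ge0.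
by apply: le_trans h; rewrite le_eqVlt; apply/orP; left; apply/eqP; apply: eq_bigr => i _; rewrite !mxE.
Qed.
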